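(* Let $(\mathcal{S},\mathcal{A},\tau,\mu_0,R,\gamma)$ be an MDP and let $\preceq^\xi_{\star,R}$ be the relation on possible initial trajectories given by $\xi_1\preceq^\xi_{\star,R}\xi_2\iff G_R(\xi_1)\le G_R(\xi_2)$. If $R'$ is obtained from $R$ by a finite sequence of transformations each of which is a $k$-initial potential shaping (for some $k\in\mathbb{R}$), a positive linear scaling, or a mask of unreachable transitions, then $\preceq^\xi_{\star,R'}=\preceq^\xi_{\star,R}$.
   Context: An MDP has finite $\mathcal{S},\mathcal{A}$, $\tau:\mathcal{S}\times\mathcal{A}\to\Delta(\mathcal{S})$, $\mu_0\in\Delta(\mathcal{S})$, $R:\mathcal{S}\times\mathcal{A}\times\mathcal{S}\to\mathbb{R}$, $\gamma\in(0,1)$. A transition $(s,a,s')$ is possible if $\tau(s'\mid s,a)>0$. A trajectory $\xi=(s_0,a_0,s_1,\dots)$ is possible if all its transitions are possible and initial if $\mu_0(s_0)>0$; $G(\xi)=\sum_{t\ge0}\gamma^tR(s_t,a_t,s_{t+1})$. A transition is reachable if it occurs in some possible initial trajectory; mask of unreachable transitions: $R'(x)=R(x)$ for all reachable $x$. Positive linear scaling: $R'=cR$, $c>0$. A state is initial if $\mu_0(s)>0$, terminal (for $R$) if $\tau(s\mid s,a)=1$ and $R(s,a,s)=0$ for all $a$. $k$-initial potential shaping: $R'(s,a,s')=R(s,a,s')+\gamma\Phi(s')-\Phi(s)$ with $\Phi:\mathcal{S}\to\mathbb{R}$, $\Phi=0$ on terminal states, $\Phi=k$ on initial states. *)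

(* Defs.v *)
From HB Require Import structures.
From mathcomp Require Import all_boot all_order all_algebra.
From mathcomp Require Import all_classical all_reals all_analysis.
From Stdlib Require Import Relations.
Set Implicit Arguments. Unset Strict Implicit. Unset Printing Implicit Defensive.
Import Order.TTheory GRing.Theory Num.Theory.
Local Open Scope ring_scope.

(* The environment part of an MDP (S, A, tau, mu0, gamma); the reward
   function is kept separate since the theorem transforms it. *)
Record mdp (R : realType) (S A : finType) := MDP {
  tau : S -> A -> S -> R;            (* tau s a s' = tau(s' | s, a) *)
  mu0 : S -> R;
  gamma : R;
  tau_ge0 : forall s a s', 0 <= tau s a s';
  tau_sum1 : forall s a, \sum_(s' : S) tau s a s' = 1;
  mu0_ge0 : forall s, 0 <= mu0 s;
  mu0_sum1 : \sum_(s : S) mu0 s = 1;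
  gamma_gt0 : 0 < gamma;
  gamma_lt1 : gamma < 1 }.

Definition reward (R : realType) (S A : finType) := S -> A -> S -> R.

Record traj (S A : Type) := Traj { st : nat -> S; act : nat -> A }.

Section Defs.
Context {R : realType} {S A : finType} (M : mdp R S A).

Definition possible_transition (s : S) (a : A) (s' : S) : Prop :=
  0 < tau M s a s'.

Definition possible_traj (xi : traj S A) : Prop :=
  forall t, possible_transition (st xi t) (act xi t) (st xi t.+1).

Definition initial_traj (xi : traj S A) : Prop := 0 < mu0 M (st xi 0).

Definition ret (Rw : reward R S A) (xi : traj S A) : R :=
  limn (fun n : nat =>
    \sum_(0 <= t < n) gamma M ^+ t * Rw (st xi t) (act xi t) (st xi t.+1)).

Definition reachable (s : S) (a : A) (s' : S) : Prop :=
  exists xi t, possible_traj xi /\ initial_traj xi /\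
    st xi t = s /\ act xi t = a /\ st xi t.+1 = s'.

Definition mask_unreachable (Rw Rw' : reward R S A) : Prop :=
  forall s a s', reachable s a s' -> Rw' s a s' = Rw s a s'.

Definition pos_scaling (Rw Rw' : reward R S A) : Prop :=
  exists c : R, 0 < c /\ forall s a s', Rw' s a s' = c * Rw s a s'.

Definition initial_state (s : S) : Prop := 0 < mu0 M s.

Definition terminal_state (Rw : reward R S A) (s : S) : Prop :=
  forall a, tau M s a s = 1 /\ Rw s a s = 0.

Definition k_initial_shaping (k : R) (Rw Rw' : reward R S A) : Prop :=
  exists Phi : S -> R,
    (forall s, terminal_state Rw s -> Phi s = 0) /\
    (forall s, initial_state s -> Phi s = k) /\
    (forall s a s', Rw' s a s' = Rw s a s' + gamma M * Phi s' - Phi s).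

Definition allowed_step (Rw Rw' : reward R S A) : Prop :=
  (exists k : R, k_initial_shaping k Rw Rw') \/
  pos_scaling Rw Rw' \/ mask_unreachable Rw Rw'.

Definition obtainable (Rw Rw' : reward R S A) : Prop :=
  clos_refl_trans_1n _ allowed_step Rw Rw'.

End Defs.

(* Main.v *)
Require Import Defs.
From HB Require Import structures.
From mathcomp Require Import all_boot all_order all_algebra.
From mathcomp Require Import all_classical all_reals all_analysis.
From Stdlib Require Import Relations.
From mathcomp Require Import ring.
Import Order.TTheory GRing.Theory Num.Theory.
Import numFieldNormedType.Exports.
Local Open Scope ring_scope.

Section Proofs.
Context {R : realType} {S A : finType} (M : mdp R S A).

Definition ps (Rw : reward R S A) (xi : traj S A) : nat -> R :=
  series (fun t => gamma M ^+ t * Rw (st xi t) (act xi t) (st xi t.+1)).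

Lemma retE Rw xi : ret M Rw xi = limn (ps Rw xi).
Proof. by []. Qed.

Lemma disc_cvg (h : nat -> R) B : (forall t, `|h t| <= B) ->
  cvgn (series (fun t => gamma M ^+ t * h t)).
Proof.
move=> hB; apply: normed_cvg.
have B0 : 0 <= B by apply: le_trans (hB 0%N).
have g0 : 0 <= gamma M by apply/ltW/gamma_gt0.
apply: (@series_le_cvg _ _ (geometric B (gamma M))).
- move=> n /=; exact: normr_ge0.
- by move=> n /=; rewrite mulr_ge0 // exprn_ge0.
- move=> n /=; rewrite normrM normrX ger0_norm // mulrC.
  by rewrite ler_wpM2r ?exprn_ge0.
- apply: is_cvg_geometric_series.
  by rewrite ger0_norm // gamma_lt1.
Qed.

Lemma fin_bound (f : S -> A -> S -> R) : exists B, forall s a s', `|f s a s'| <= B.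
Proof.
exists (\sum_(x : S * A * S) `|f x.1.1 x.1.2 x.2|) => s a s'.
rewrite (bigD1 (s, a, s')) //= lerDl.
by apply: sumr_ge0 => *.
Qed.

Lemma ps_cvg Rw xi : cvgn (ps Rw xi).
Proof.
have [B HB] := fin_bound Rw.
by apply: (@disc_cvg (fun t => Rw (st xi t) (act xi t) (st xi t.+1)) B).
Qed.

Lemma step_ret Rw Rw' : allowed_step M Rw Rw' ->
  exists c d : R, 0 < c /\ forall xi, possible_traj M xi -> initial_traj M xi ->
    ret M Rw' xi = c * ret M Rw xi + d.
Proof.
case=> [[k [Phi [_ [Hi HR]]]] | [[c [c0 Hc]] | Hm]].
- exists 1, (- k); split => // xi _ xin.
  rewrite mul1r !retE.
  have Hps : ps Rw' xi = (fun n => ps Rw xi n +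
      (gamma M ^+ n * Phi (st xi n) - Phi (st xi 0))).
    apply/funext => n; rewrite /ps /series /=.
    elim: n => [|n IH]; first by rewrite !big_geq // expr0 mul1r subrr addr0.
    rewrite !big_nat_recr //= IH HR exprS; ring.
  have [B HB] := fin_bound (fun s (_ : A) (_ : S) => Phi s).
  have Hg := cvg_series_cvg_0
      (@disc_cvg (fun t => Phi (st xi t)) B (fun t => HB _ (act xi 0) (st xi 0))).
  rewrite Hps; apply: cvg_lim => //.
  have -> : - k = 0 - Phi (st xi 0) by rewrite Hi // sub0r.
  apply: cvgD; first exact: ps_cvg.
  apply: cvgB; [exact: Hg | exact: cvg_cst].
- exists c, 0; split => // xi _ _.
  rewrite addr0 !retE.
  have -> : ps Rw' xi = (fun n => c * ps Rw xi n).
    apply/funext => n; rewrite /ps /series /= mulr_sumr.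
    by apply: eq_bigr => t _; rewrite Hc mulrCA.
  apply: cvg_lim => //; apply: cvgMl_tmp; exact: (ps_cvg Rw xi).
- exists 1, 0; split => // xi xip xin.
  rewrite mul1r addr0 !retE; congr (limn _).
  apply/funext => n; rewrite /ps /series /=.
  apply: eq_bigr => t _; rewrite Hm //.
  by exists xi, t.
Qed.

End Proofs.

Theorem theorem3p14 (R : realType) (S A : finType) (M : mdp R S A)
    (Rw Rw' : reward R S A) :
  obtainable M Rw Rw' ->
  forall xi1 xi2 : traj S A,
    possible_traj M xi1 -> initial_traj M xi1 ->
    possible_traj M xi2 -> initial_traj M xi2 ->
    (ret M Rw xi1 <= ret M Rw xi2 <-> ret M Rw' xi1 <= ret M Rw' xi2).
Proof.
elim=> [x | x y z Hxy _ IH] xi1 xi2 p1 i1 p2 i2; first by [].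
apply: iff_trans _ (IH _ _ p1 i1 p2 i2).
have [c [d [c0 H]]] := step_ret M x y Hxy.
rewrite !H // lerD2r ler_pM2l //.
Qed.
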